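(* Consider any sub-auction (upper level or lower level) of the hierarchical auction, run either with Rule A (exact winner determination with price $\max\{q^{\mathrm{base}},q^{\mathrm{vcg}}\}$) or with Rule B (greedy winner determination with price $\max\{q^{\mathrm{base}},q^{\mathrm{greedy}}\}$), as defined in the context. Then the mechanism is individually rational for truthful bidders: every bidder $k$ that bids truthfully ($b_k(S)=v_k(S)$ for all $S\in\mathcal{B}_k$) obtains utility $u_k\ge 0$; that is, if $k$ wins bundle $S_k$ and is charged $q_k$, then $v_k(S_k)-q_k\ge 0$ (a losing bidder pays nothing and has utility $0$).
   Context: Sub-auction model. There are $R$ resource types and an integer capacity vector $Q\in\mathbb{Z}_{\ge0}^R$ held by a single seller (who is also the auctioneer). In the hierarchical auction, the upper-level sub-auction has the infrastructure provider as seller with $R=3$ (subchannels, discretized power units, antennas) and capacities equal to the leftover (non-reserved) resources, the bidders being the virtual network operators; each lower-level sub-auction has one virtual network operator as seller with $R=2$ and capacities $(\hat C_m J,\hat P_m)$ (available subchannels times maximal number $J$ of users per subchannel, and available power units), the bidders being its users. Both levels are instances of the following model. Each bidder $i$ in a finite set $N$ submits an XOR bid: a finite set $\mathcal{B}_i\subset\mathbb{Z}_{\ge0}^R\setminus\{0\}$ of bundles and a bid value $b_i(S)\ge 0$ for each $S\in\mathcal{B}_i$ (a single-minded bidder has $|\mathcal{B}_i|=1$). A feasible allocation is $x=(x_i(S))$ with $x_i(S)\in\{0,1\}$, $\sum_{S\in\mathcal{B}_i}x_i(S)\le1$ for each $i$, and $\sum_i\sum_{S}x_i(S)\,S\le Q$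 componentwise; bidder $i$ wins $S$ if $x_i(S)=1$. Bidder $i$ has a private valuation $v_i:\mathcal{B}_i\to\mathbb{R}_{\ge0}$; its utility is $u_i=v_i(S_i)-q_i$ if it wins $S_i$ and is charged $q_i$, and $u_i=0$ if it wins nothing (losers are not charged). Base price: there is a vector $\beta\in\mathbb{R}_{\ge0}^R$ of per-unit base access prices, known to all, and $q^{\mathrm{base}}(S)=\beta\cdot S$. Standing assumption: a bidder places a bid on a bundle $S$ only if $v_i(S)\ge q^{\mathrm{base}}(S)$. Rule A: the allocation $x^*$ maximizes $\sum_i\sum_S b_i(S)x_i(S)$ over feasible allocations; with $W$ its optimal value and $W_{-k}$ the optimal value of the same problem with bidder $k$ removed, a winner $k$ of bundle $S_k$ is charged $q_k=\max\{q^{\mathrm{base}}(S_k),q_k^{\mathrm{vcg}}\}$ where $q_k^{\mathrm{vcg}}=W_{-k}-(W-b_k(S_k))$. Rule B: fix weights $\omega\in\mathbb{R}_{>0}^R$ and let $|S|=\omega\cdot S$. List all pairs $(i,S)$ with $S\in\mathcal{B}_i$ in nonincreasing order of $b_i(S)/\sqrt{|S|}$ (ties broken by a fixed rule); scanning the list, accept pair $(i,S)$ (bidder $i$ wins $S$) iff $i$ has not yet won a bundle and $S$ fits in the remaining capacity, and then subtract $S$ from the remaining capacity. For a winner $k$ of $S_k$, let $\mathbb{B}_k$ be the set of pairs $(j,T)$, $j\neq k$, such that $j$ wins nothing in this run but the same greedy procedure run on the bids of all bidders except $k$ accepts $(j,T)$ (bidder $k$ ''uniquely blocks'' $j$). Then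 $q_k^{\mathrm{greedy}}=\max_{(j,T)\in\mathbb{B}_k}\frac{b_j(T)}{\sqrt{|T|}}\sqrt{|S_k|}$ (taken as $0$ if $\mathbb{B}_k=\emptyset$) and $k$ is charged $q_k=\max\{q^{\mathrm{base}}(S_k),q_k^{\mathrm{greedy}}\}$. *)

(* Defs.v *)
From HB Require Import structures.
From mathcomp Require Import all_boot all_order all_algebra.
From mathcomp Require Import reals.
Set Implicit Arguments. Unset Strict Implicit. Unset Printing Implicit Defensive.
Import Order.TTheory GRing.Theory Num.Theory.
Local Open Scope ring_scope.

Section SubAuction.
Variable F : realType.
Variable r : nat.               (* number of resource types R *)
Variable N : finType.

Definition bundle := {ffun 'I_r -> nat}.
Definition bzero : bundle := [ffun=> 0%N].

Definition wdot (w : 'I_r -> F) (S : bundle) : F := \sum_(t < r) w t * (S t)%:R.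
Definition qbase (beta : 'I_r -> F) (S : bundle) : F := wdot beta S.

(* Allocations: bidder i wins Some S (x_i(S) = 1) or nothing (None);
   this is exactly a 0/1 vector x with sum_S x_i(S) <= 1 for each i. *)
Definition alloc := N -> option bundle.
Definition used (o : option bundle) (t : 'I_r) : nat :=
  if o is Some X then X t else 0%N.
Definition feasible (B : N -> seq bundle) (Q : bundle) (a : alloc) : Prop :=
  (forall i S, a i = Some S -> S \in B i) /\
  (forall t : 'I_r, (\sum_(i : N) used (a i) t <= Q t)%N).
Definition oval (b : N -> bundle -> F) (i : N) (o : option bundle) : F :=
  if o is Some X then b i X else 0.
Definition welfare (b : N -> bundle -> F) (a : alloc) : F :=
  \sum_(i : N) oval b i (a i).

Definition optimal_alloc B Q b (a : alloc) : Prop :=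
  feasible B Q a /\ forall a', feasible B Q a' -> welfare b a' <= welfare b a.
Definition optval b (P : alloc -> Prop) (w : F) : Prop :=
  (exists a, P a /\ welfare b a = w) /\ (forall a, P a -> welfare b a <= w).

Definition utility (v : N -> bundle -> F) (k : N) (o : option bundle)
  (price : bundle -> F) : F :=
  if o is Some X then v k X - price X else 0.

(* Wk = W_{-k}, the optimal value with bidder k removed *)
Definition priceA (beta : 'I_r -> F) b (astar : alloc) (k : N) (Wk : F)
  (S : bundle) : F :=
  Num.max (qbase beta S) (Wk - (welfare b astar - b k S)).

Definition fits (S cap : bundle) : bool := [forall t, (S t <= cap t)%N].
Definition bsub (cap S : bundle) : bundle := [ffun t => (cap t - S t)%N].

Fixpoint greedy_aux (cap : bundle) (won : seq N) (L : seq (N * bundle))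
  : seq (N * bundle) :=
  match L with
  | [::] => [::]
  | (i, X) :: L' =>
      if (i \notin won) && fits X cap
      then (i, X) :: greedy_aux (bsub cap X) (i :: won) L'
      else greedy_aux cap won L'
  end.
Definition greedy (Q : bundle) (L : seq (N * bundle)) := greedy_aux Q [::] L.

Definition winners (G : seq (N * bundle)) : seq N := map fst G.
Definition won_bundle (G : seq (N * bundle)) (k : N) : option bundle :=
  ohead [seq p.2 | p <- G & p.1 == k].

(* |S| = omega . S and the greedy score b_i(S)/sqrt|S| *)
Definition score (omega : 'I_r -> F) (b : N -> bundle -> F) (p : N * bundle) : F :=
  b p.1 p.2 / Num.sqrt (wdot omega p.2).

(* run on all bids except those of k: same ordered list with k's pairs removed
   (same fixed tie-breaking rule) *)
Definition Lminus (L : seq (N * bundle)) (k : N) := [seq p <- L | p.1 != k].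

Definition blocked (Q : bundle) (L : seq (N * bundle)) (k : N) :=
  [seq p <- greedy Q (Lminus L k) |
     (p.1 != k) && (p.1 \notin winners (greedy Q L))].

Definition qgreedy omega b Q L (k : N) (S : bundle) : F :=
  \big[Num.max/0]_(p <- blocked Q L k) (score omega b p * Num.sqrt (wdot omega S)).

Definition priceB beta omega b Q L (k : N) (S : bundle) : F :=
  Num.max (qbase beta S) (qgreedy omega b Q L k S).

Definition greedy_order omega b (B : N -> seq bundle) (L : seq (N * bundle)) : Prop :=
  uniq L /\ (forall p, (p \in L) = (p.2 \in B p.1)) /\
  sorted (fun p q => score omega b q <= score omega b p) L.

End SubAuction.

(* Main.v *)
Require Import Defs.
From HB Require Import structures.
From mathcomp Require Import all_boot all_order all_algebra.
From mathcomp Require Import reals.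
Import Order.TTheory GRing.Theory Num.Theory.
Local Open Scope ring_scope.

Section Aux.
Variable F : realType.
Variable r : nat.
Variable N : finType.

Lemma greedy_aux_sub (cap : bundle r) (won : seq N) (L : seq (N * bundle r)) (p : N * bundle r) :
  p \in greedy_aux cap won L -> p \in L.
Proof.
elim: L cap won => [|[i X] L IH] cap won //=.
case: ifP => _.
  by rewrite !in_cons => /orP [->|/IH ->] //; rewrite orbT.
by rewrite in_cons => /IH ->; rewrite orbT.
Qed.

Lemma won_bundle_in (G : seq (N * bundle r)) k S :
  won_bundle G k = Some S -> (k, S) \in G.
Proof.
rewrite /won_bundle; elim: G => [|[i X] G IH] //=.
case: eqP => [-> /= [->]|_ /IH H]; first by rewrite mem_head.
by rewrite in_cons H orbT.
Qed.

Lemma blocked_score (omega : 'I_r -> F) (b : N -> bundle r -> F) L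
  (cap : bundle r) (won : seq N) k S p :
  sorted (fun p q => score omega b q <= score omega b p) L ->
  k \notin won ->
  won_bundle (greedy_aux cap won L) k = Some S ->
  p \in greedy_aux cap won (Lminus L k) ->
  p.1 \notin winners (greedy_aux cap won L) ->
  score omega b p <= score omega b (k, S).
Proof.
have tr : transitive (fun p q : N * bundle r => score omega b q <= score omega b p).
  by move=> y x z /= H1 H2; exact: le_trans H2 H1.
elim: L cap won => [|[i X] L IH] cap won //= Hs Hk.
have HsL : sorted (fun p q => score omega b q <= score omega b p) L.
  by move: Hs; case: L {IH} => //= a l /andP [].
rewrite /Lminus /=.
case: (eqVneq i k) => [Eik|Nik] /=.
- subst i.
  case: ifP => Hif.
    rewrite /won_bundle /= eqxx /= => [[<-]] Hp _.
    have Hin := greedy_aux_sub _ _ _ _ Hp.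
    rewrite mem_filter in Hin; case/andP: Hin => _ Hin.
    have := order_path_min tr Hs => /allP /(_ _ Hin) //.
  exact: IH.
- case: ifP => Hif.
    rewrite /won_bundle /= (negbTE Nik) /= => Hw.
    rewrite in_cons => /orP [/eqP Ep|Hp].
      by subst p; rewrite /winners /= mem_head.
    rewrite /winners /= in_cons negb_or => /andP [_ Hq].
    apply: (IH _ _ HsL _ Hw Hp Hq).
    by rewrite in_cons negb_or eq_sym Nik.
  exact: IH.
Qed.

End Aux.
Arguments greedy_aux_sub {r N cap won L p}.
Arguments won_bundle_in {r N G k S}.
Arguments blocked_score {F r N omega b L cap won k S p}.


Theorem theorem3p1 (F : realType) (r : nat) (N : finType)
    (Q : bundle r) (B : N -> seq (bundle r))
    (b v : N -> bundle r -> F) (beta : 'I_r -> F)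
    (hB0 : forall i S, S \in B i -> S != bzero r)
    (hb0 : forall i S, S \in B i -> 0 <= b i S)
    (hbeta : forall t, 0 <= beta t)
    (hstand : forall i S, S \in B i -> qbase beta S <= v i S) :
  (* Rule A *)
  (forall astar : alloc r N, optimal_alloc B Q b astar ->
   forall k : N, (forall S, S \in B k -> b k S = v k S) ->
   forall Wk : F, optval b (fun a => feasible B Q a /\ a k = None) Wk ->
   0 <= utility v k (astar k) (priceA beta b astar k Wk))
  /\
  (* Rule B *)
  (forall (omega : 'I_r -> F) (L : seq (N * bundle r)),
   (forall t, 0 < omega t) -> greedy_order omega b B L ->
   forall k : N, (forall S, S \in B k -> b k S = v k S) ->
   0 <= utility v k (won_bundle (greedy Q L) k) (priceB beta omega b Q L k)).
Proof.
have qb0 : forall S, 0 <= qbase beta S.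
  move=> S; rewrite /qbase /wdot; apply: sumr_ge0 => t _.
  by apply: mulr_ge0; rewrite ?hbeta ?ler0n.
split.
- move=> astar [Hf Hopt] k Hbv Wk [[a [[Haf _] Hwa]] _].
  rewrite /utility; case E: (astar k) => [S|] //.
  have HS : S \in B k by case: Hf => H _; exact: H _ _ E.
  rewrite subr_ge0 /priceA ge_max hstand //=.
  rewrite -(Hbv _ HS) -Hwa.
  have := Hopt a Haf; move: (welfare b a) (welfare b astar) (b k S) => x y z H.
  by rewrite lerBlDr addrC subrK.
- move=> omega L Homega [Hu [HL Hs]] k Hbv.
  rewrite /utility; case E: (won_bundle _ _) => [S|] //.
  have HS : S \in B k.
    have := greedy_aux_sub (won_bundle_in E).
    by rewrite HL.
  have v0 : 0 <= v k S by apply: le_trans (qb0 S) (hstand _ _ HS).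
  rewrite subr_ge0 /priceB ge_max hstand //=.
  rewrite /qgreedy big_seq.
  apply: (big_ind (fun x => x <= v k S)) => //.
    by move=> x y Hx Hy; rewrite ge_max Hx Hy.
  move=> p; rewrite /blocked mem_filter => /andP [/andP [_ Hp1] Hp].
  have nk : k \notin [::] by [].
  have Hsc := blocked_score Hs nk E Hp Hp1.
  have s0 := sqrtr_ge0 (wdot omega S).
  apply: le_trans (ler_wpM2r s0 Hsc) _.
  rewrite /score /= (Hbv _ HS).
  have [->|nz] := eqVneq (Num.sqrt (wdot omega S)) 0; first by rewrite mulr0.
  by rewrite divfK.
Qed.
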